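(* Consider the $(n,t_e,\lambda)$-full-access setting with $\lambda=\infty$ (Eve never switches the paths she accesses once chosen). Let $r=n-t_e$. For every integer $u>\log(2n-t_e)$ there is a one-round $(ur,\,un,\,0,\,0)$-PMT protocol over this setting; these protocols (indexed by $u$) form a P-PMT family with secrecy rate $R=1-\frac{t_e}{n}$.
   Context: Multipath setting: an $(n,t_a,t_b,t_e,\lambda)$-multipath setting ($0\le t_a,t_b,t_e\le n$) has a sender Alice, a receiver Bob and a passive, computationally unbounded eavesdropper Eve, connected by $n$ disjoint paths; Alice and Bob share no key. At any time Alice, Bob and Eve access at most $t_a,t_b,t_e$ paths respectively. Time is divided into intervals, each corresponding to sending $\lambda$ consecutive bits over a path; at the start of each interval every party (Eve included, adaptively) chooses its accessed paths and keeps them for the whole interval. Anything sent over a path is seen by all parties accessing that path in that interval; Eve's view is everything sent over her accessed paths. The case $t_a=t_b=n$ is called the $(n,t_e,\lambda)$-full-access setting. PMT protocol: a protocol is a $(k,c,\delta,\epsilon)$-PMT protocol if it transmits any message $S\in\{0,1\}^k$ from Alice to Bob using a total of $c$ communicated bits, with Bob outputting $\hat S$, such that $\Pr(\hat S\neq s)\le\delta$ for all $s\in\{0,1\}^k$ and $SD(View_E(s_1),View_E(s_2))\le\epsilon$ for all $s_1,s_2\in\{0,1\}^k$, where $View_E(s)$ is Eve's view when $s$ is sent (for any Eve strategy) and $SD(X,Y)=\frac12\sum_x|\Pr(X=x)-\Pr(Y=x)|$. Its secrecy rate is $k/c$. P-PMT family: a sequence $(\Pi_i)_{i\in\mathbb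 N}$ of $(k_i,c_i,0,0)$-PMT protocols with $k_{i+1}>k_i$; its P-secrecy rate is $\inf_i k_i/c_i$. Logarithms are base 2. *)

(* Defs.v *)
From HB Require Import structures.
From mathcomp Require Import all_boot all_order all_algebra.
From mathcomp Require Import boolp classical_sets reals exp.
Import Order.TTheory GRing.Theory Num.Theory.
Local Open Scope ring_scope.
Local Open Scope classical_set_scope.

Definition log2 {R : realType} (x : R) : R := ln x / ln 2.

(* A one-round protocol in the (n, t_e, lambda = oo)-full-access setting for
   k-bit messages: Alice draws randomness r from a finite probability space
   (rnd, rho), and sends the bit string enc s r i over path i (of fixed length
   len i).  Bob, who accesses all n paths, sees the whole word and decodes. *)
Record protocol (R : realType) (n k : nat) := Protocol {
  rnd : finType;
  rho : rnd -> R;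
  len : 'I_n -> nat;
  enc : k.-tuple bool -> rnd -> {ffun 'I_n -> seq bool};
  dec : {ffun 'I_n -> seq bool} -> k.-tuple bool }.
Arguments rnd {R n k}. Arguments rho {R n k}. Arguments len {R n k}.
Arguments enc {R n k}. Arguments dec {R n k}.

Set Implicit Arguments. Unset Strict Implicit. Unset Printing Implicit Defensive.

Section Defs.
Variables (R : realType) (n k : nat) (P : protocol R n k).

Definition valid_protocol : Prop :=
  [/\ forall r, 0 <= rho P r, \sum_r rho P r = 1
    & forall s r i, size (enc P s r i) = len P i].

Definition cost : nat := (\sum_i len P i)%N.

Definition prob (E : pred (rnd P)) : R := \sum_(r | E r) rho P r.

Definition err (s : k.-tuple bool) : R := prob (fun r => dec P (enc P s r) != s).

(* Eve's view when she accesses the set of paths E for the whole protocol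
   (lambda = oo): the contents of the paths in E (other paths blanked). *)
Definition view (E : {set 'I_n}) (w : {ffun 'I_n -> seq bool})
  : {ffun 'I_n -> seq bool} := [ffun i => if i \in E then w i else [::]].

Definition viewDist (E : {set 'I_n}) (s : k.-tuple bool) v : R :=
  prob (fun r => view E (enc P s r) == v).

(* statistical distance of Eve's views for s1 and s2; the sum ranges over the
   (finite) union of the supports, outside of which both probabilities are 0 *)
Definition SD_view (E : {set 'I_n}) (s1 s2 : k.-tuple bool) : R :=
  2^-1 * \sum_(v <- undup ([seq view E (enc P s1 r) | r <- enum (rnd P)]
                          ++ [seq view E (enc P s2 r) | r <- enum (rnd P)]))
           `|viewDist E s1 v - viewDist E s2 v|.

Definition is_PMT (te c : nat) (delta eps : R) : Prop :=
  [/\ valid_protocol, cost = c,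
      forall s, err s <= delta
    & forall (E : {set 'I_n}), (#|E| <= te)%N ->
        forall s1 s2, SD_view E s1 s2 <= eps].
End Defs.

Definition is_PPMT_family (R : realType) (n te : nat) (k c : nat -> nat)
  (Pi : forall i, protocol R n (k i)) : Prop :=
  (forall i, is_PMT (Pi i) te (c i) 0 0) /\ (forall i, (k i < k i.+1)%N).

Definition P_rate (R : realType) (k c : nat -> nat) : R :=
  inf [set x : R | exists i, x = (k i)%:R / (c i)%:R].

(* Main.v *)
Require Import Defs.
From HB Require Import structures.
From mathcomp Require Import all_boot all_order all_algebra all_field.
From mathcomp Require Import boolp classical_sets reals exp.
From mathcomp Require Import ring.
Import Order.TTheory GRing.Theory Num.Theory.
Local Open Scope ring_scope.

Lemma interp (F : fieldType) (xs : seq F) (g : F -> F) : uniq xs ->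
  exists p : {poly F}, (size p <= size xs)%N /\ forall x, x \in xs -> p.[x] = g x.
Proof.
elim: xs => [|x xs IH] /=.
  by move=> _; exists 0; rewrite size_poly0.
case/andP=> xn /IH [p [sp hp]].
pose w := \prod_(y <- xs) ('X - y%:P).
have wx : w.[x] != 0.
  by have := root_prod_XsubC xs x; rewrite /root => ->.
exists (p + ((g x - p.[x]) / w.[x]) *: w); split.
  apply: leq_trans (size_polyD _ _) _; rewrite geq_max.
  rewrite (leq_trans sp) //=.
  apply: leq_trans (size_scale_leq _ _) _.
  by rewrite size_prod_XsubC.
move=> y; rewrite inE => /orP[/eqP->|yi].
  rewrite hornerD hornerZ divfK //; ring.
have wy : w.[y] = 0.
  by have := root_prod_XsubC xs y; rewrite /root yi => /eqP.
by rewrite hornerD hornerZ wy mulr0 addr0 hp.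
Qed.

Lemma bij_card (A B : finType) : #|A| = #|B| -> {f : A -> B | injective f}.
Proof.
move=> h; exists (fun x => enum_val (cast_ord h (enum_rank x))).
move=> x y /enum_val_inj /cast_ord_inj /enum_rank_inj //.
Qed.

Section Core.
Variables (R : realType) (n te u : nat) (F : finFieldType).
Variable (a : 'I_n -> F).
Hypothesis aI : injective a.
Variable (bits : F -> u.-tuple bool).
Hypothesis bitsI : injective bits.
Variable (mf : (u * (n - te)).-tuple bool -> {ffun 'I_(n - te) -> F}).
Hypothesis mfI : injective mf.
Hypothesis hte : (te <= n)%N.

Definition PK (K : {ffun 'I_te -> F}) : {poly F} :=
  \poly_(i < te) odflt 0 (omap K (insub i)).
Definition PM s : {poly F} :=
  \poly_(i < n) (if (i < te)%N then 0 else odflt 0 (omap (mf s) (insub (i - te)%N))).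
Definition encP s K : {ffun 'I_n -> seq bool} :=
  [ffun i => val (bits (PK K + PM s).[a i])].

Lemma encI s s' K K' : encP s K = encP s' K' -> s = s'.
Proof.
move=> he.
have h i : (PK K + PM s).[a i] = (PK K' + PM s').[a i].
  by apply: bitsI; apply: val_inj; have := congr1 (fun f : {ffun 'I_n -> seq bool} => f i) he; rewrite !ffunE.
set d := (PK K + PM s) - (PK K' + PM s').
have d0 : d = 0.
  apply/eqP; apply/negPn/negP => dn.
  have := max_poly_roots dn (rs := [seq a i | i <- enum 'I_n]).
  rewrite size_map size_enum_ord map_inj_uniq ?enum_uniq //.
  have -> : all (root d) [seq a i | i <- enum 'I_n].
    apply/allP => x /mapP[i _ ->]; rewrite /root /d hornerD hornerN h subrr //.
  move=> /(_ isT isT); apply/negP; rewrite -leqNgt.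
  have sK L : (size (PK L) <= n)%N by apply: leq_trans (size_poly _ _) hte.
  have sM L : (size (PM L) <= n)%N by apply: size_poly.
  apply: leq_trans (size_polyD _ _) _; rewrite geq_max size_polyN.
  by rewrite !(leq_trans (size_polyD _ _)) // geq_max ?sK ?sM.
apply: mfI; apply/ffunP => j.
have := congr1 (fun p : {poly F} => p`_(te + j)) d0.
rewrite /d !coefB !coefD !coef_poly ltnNge leq_addr /= addKn.
have jn : (te + j < n)%N by rewrite -ltn_subRL.
rewrite jn (insubT (fun x => x < n - te)%N (ltn_ord j)) /= !add0r.
have -> : Sub (nat_of_ord j) (ltn_ord j) = j by apply: val_inj.
by move/eqP; rewrite coef0 subr_eq0 => /eqP.
Qed.

Definition shift (D K : {ffun 'I_te -> F}) : {ffun 'I_te -> F} := [ffun j => K j + D j].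

Lemma shiftI D : injective (shift D).
Proof.
move=> K K' h; apply/ffunP => j.
by have := congr1 (fun f : {ffun 'I_te -> F} => f j) h; rewrite !ffunE => /addIr.
Qed.

Lemma PK_shift D K : PK (shift D K) = PK K + PK D.
Proof.
apply/polyP => i; rewrite coefD !coef_poly.
case: ltnP => hi; last by rewrite addr0.
rewrite (insubT (fun x => x < te)%N hi) /= ffunE //.
Qed.

Lemma secret (E : {set 'I_n}) s1 s2 : (#|E| <= te)%N ->
  exists D, forall K, view E (encP s1 K) = view E (encP s2 (shift D K)).
Proof.
move=> hE.
have [p [sp hp]] := @interp F [seq a i | i <- enum E] (fun x => (PM s1).[x] - (PM s2).[x])
  ltac:(by rewrite map_inj_uniq // enum_uniq).
rewrite size_map -cardE in sp.
exists [ffun j : 'I_te => p`_j] => K.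
have PD : PK [ffun j : 'I_te => p`_j] = p.
  apply/polyP => i; rewrite coef_poly.
  case: ltnP => hi.
    by rewrite (insubT (fun x => x < te)%N hi) /= ffunE.
  by rewrite nth_default // (leq_trans sp (leq_trans hE hi)).
apply/ffunP => i; rewrite !ffunE; case: ifP => // iE.
rewrite PK_shift PD !hornerD hp; last by apply: map_f; rewrite mem_enum.
by congr (val (bits _)); ring.
Qed.

Definition theP : protocol R n (u * (n - te)) :=
  @Protocol R n (u * (n - te)) {ffun 'I_te -> F}
    (fun _ => (#|{ffun 'I_te -> F}|%:R)^-1)
    (fun _ => u) encP
    (fun w => if [pick x : (u * (n - te)).-tuple bool * {ffun 'I_te -> F} |
                  encP x.1 x.2 == w] is Some x then x.1
              else [tuple of nseq (u * (n - te)) false]).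

Lemma theP_PMT : is_PMT theP te (u * n) 0 0.
Proof.
have cpos : (0 < #|{ffun 'I_te -> F}|)%N by apply/card_gt0P; exists [ffun=> 0].
split.
- split.
  + by move=> _ /=; rewrite invr_ge0 ler0n.
  + rewrite /= sumr_const.
    have hm (m : nat) : (0 < m)%N -> ((m%:R : R)^-1 *+ m = 1).
      by move=> m0; rewrite -(mulr_natr ((m%:R : R)^-1)) mulVf // pnatr_eq0 -lt0n.
    exact: hm.
  + by move=> s K i /=; rewrite ffunE size_tuple.
- by rewrite /cost /= sum_nat_const card_ord mulnC.
- move=> s; rewrite /err /prob big_pred0 // => K /=.
  case: pickP => [x /eqP hx|h]; first by rewrite (@encI _ _ _ _ hx) eqxx.
  by have := h (s, K); rewrite eqxx.
- move=> E hE s1 s2; have [D hD] := @secret E s1 s2 hE.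
  have eqv v : viewDist theP E s1 v = viewDist theP E s2 v.
    rewrite /viewDist /prob [RHS](reindex_inj (@shiftI D)) /=.
    by apply: eq_bigl => K; rewrite hD.
  rewrite /SD_view big1 ?mulr0 // => v _.
  by rewrite eqv subrr normr0.
Qed.
End Core.

Lemma log_bound (R : realType) (x u : nat) : (0 < x)%N ->
  log2 (x%:R : R) < u%:R -> (x < 2 ^ u)%N.
Proof.
move=> x0 hl; rewrite ltnNge; apply/negP => h.
move: hl; apply/negP; rewrite -leNgt /log2.
have l2 : 0 < ln (2 : R) by apply: ln_gt0; rewrite ltr1n.
rewrite ler_pdivlMr //.
have -> : u%:R * ln (2 : R) = ln ((2 : R) ^+ u) by rewrite lnXn // mulr_natl.
rewrite ler_ln ?posrE ?exprn_gt0 ?ltr0n //.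
by rewrite -natrX ler_nat.
Qed.

Theorem theorem1 (R : realType) (n te : nat) (hte : (te < n)%N) :
  let r := (n - te)%N in
  (forall u : nat, log2 ((2 * n - te)%N%:R : R) < u%:R ->
     exists P : protocol R n (u * r), is_PMT P te (u * n) 0 0)
  /\
  (forall u0 : nat, log2 ((2 * n - te)%N%:R : R) < u0%:R ->
     exists Pi : forall i : nat, protocol R n ((u0 + i) * r),
       is_PPMT_family te (fun i => ((u0 + i) * n)%N) Pi /\
       P_rate R (fun i => ((u0 + i) * r)%N) (fun i => ((u0 + i) * n)%N)
         = 1 - te%:R / n%:R).
Proof.
move=> r.
have bnd u : log2 ((2 * n - te)%N%:R : R) < u%:R -> (0 < u)%N /\ (n < 2 ^ u)%N.
  move=> hl.
  have x0 : (0 < 2 * n - te)%N by rewrite subn_gt0 mul2n -addnn (leq_trans hte) ?leq_addr.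
  have h := @log_bound R _ _ x0 hl.
  have nx : (n < 2 * n - te)%N by rewrite ltn_subRL mul2n -addnn ltn_add2r.
  split.
    by case: u hl h {nx} => // _; rewrite expn0 ltnS leqn0 => /eqP h0; rewrite h0 in x0.
  exact: ltn_trans nx h.
have part1 u : log2 ((2 * n - te)%N%:R : R) < u%:R ->
    exists P : protocol R n (u * r), is_PMT P te (u * n) 0 0.
  move=> /bnd [u0 hu].
  have [F _ hF] := @pPrimePowerField 2 u isT u0.
  have hn : (n <= #|F|)%N by rewrite hF ltnW.
  have [bits bitsI] : {f : F -> u.-tuple bool | injective f}.
    by apply: bij_card; rewrite card_tuple card_bool hF.
  have [mf mfI] : {f : (u * r).-tuple bool -> {ffun 'I_r -> F} | injective f}.
    by apply: bij_card; rewrite card_tuple card_ffun card_bool card_ord hF expnM.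
  pose a (i : 'I_n) : F := enum_val (widen_ord hn i).
  have aI : injective a.
    by move=> i j /enum_val_inj /(congr1 val) /= /val_inj.
  eexists; exact: (@theP_PMT R n te u F a aI bits bitsI mf mfI (ltnW hte)).
split => // u0 hu0.
have hi i : log2 ((2 * n - te)%N%:R : R) < (u0 + i)%:R.
  by apply: lt_le_trans hu0 _; rewrite ler_nat leq_addr.
exists (fun i => proj1_sig (cid (part1 _ (hi i)))); split.
  split => [i|i]; first exact: (proj2_sig (cid (part1 _ (hi i)))).
  by rewrite ltn_mul2r subn_gt0 hte addnS ltnSn.
have [u0p _] := bnd _ hu0.
rewrite /P_rate.
have -> : ([set x : R | exists i, x = ((u0 + i) * r)%N%:R / ((u0 + i) * n)%N%:R])%classic
    = [set (1 - te%:R / n%:R)]%classic.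
  apply/seteqP; split => x /=.
    move=> [i ->].
    have h1 : ((u0 + i)%:R : R) != 0 by rewrite pnatr_eq0 -lt0n ltn_addr.
    have h2 : (n%:R : R) != 0 by rewrite pnatr_eq0 -lt0n (leq_ltn_trans _ hte).
    rewrite /r !natrM natrB ?(ltnW hte) //; field.
    by rewrite -natrD h1 h2.
  move=> ->; exists 0%N.
  have h1 : ((u0 + 0)%:R : R) != 0 by rewrite pnatr_eq0 -lt0n addn0.
  have h2 : (n%:R : R) != 0 by rewrite pnatr_eq0 -lt0n (leq_ltn_trans _ hte).
  rewrite /r !natrM natrB ?(ltnW hte) //; field.
  rewrite addn0 in h1; by rewrite ?h1 ?h2.
by rewrite inf1.
Qed.
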